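(* Let $A\in\mathbb{R}^{m\times n}_{\geq 0}$ have every column nonzero, let $\mu>0$, and define $f_\mu(x)=\vec{1}^Tx+\mu\sum_{j=1}^m\exp\!\big(\tfrac{1}{\mu}(1-(Ax)_j)\big)$ and $L=4/\mu$. Let $\Delta=\{x\in\mathbb{R}^n: 0\leq x_i\leq 3/\|A_{:i}\|_\infty \ \forall i\}$. Then for any $x\in\Delta$ and $i\in[n]$: (1) if $\nabla_i f_\mu(x)\in(-1,1)$, then for all $\gamma$ with $|\gamma|\leq \frac{1}{L\|A_{:i}\|_\infty}$, $$|\nabla_i f_\mu(x)-\nabla_i f_\mu(x+\gamma e_i)|\leq L\|A_{:i}\|_\infty|\gamma|;$$ (2) if $\nabla_i f_\mu(x)\leq -1$, then for all $\gamma\leq\frac{1}{L\|A_{:i}\|_\infty}$, $$\nabla_i f_\mu(x+\gamma e_i)\leq \Big(1-\frac{L\|A_{:i}\|_\infty}{2}|\gamma|\Big)\nabla_i f_\mu(x).$$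
   Context: $A_{:i}$ denotes the $i$-th column of $A$, $\|A_{:i}\|_\infty$ its largest entry, $e_i$ the $i$-th standard basis vector, $\vec 1$ the all-ones vector, and $\nabla_i f_\mu$ the $i$-th partial derivative of $f_\mu$; explicitly $\nabla_i f_\mu(x)=1-\sum_j A_{ji}\exp(\frac1\mu(1-(Ax)_j))$. *)

(* Defs.v *)
From mathcomp Require Import all_boot all_order all_algebra.
From mathcomp Require Import all_classical all_reals all_analysis.
Set Implicit Arguments. Unset Strict Implicit. Unset Printing Implicit Defensive.
Import Order.TTheory GRing.Theory Num.Theory.
Local Open Scope ring_scope.

Section Defs.
Variables (R : realType) (m n : nat).

(* ||A_{:i}||_oo : largest entry of column i (A is entrywise nonnegative) *)
Definition colmax (A : 'M[R]_(m, n)) (i : 'I_n) : R :=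
  \big[Num.max/0]_(j < m) A j i.

Definition fmu (mu : R) (A : 'M[R]_(m, n)) (x : 'cV[R]_n) : R :=
  \sum_(i < n) x i 0 + mu * \sum_(j < m) expR ((1 - (A *m x) j 0) / mu).

(* i-th partial derivative of f_mu, as given explicitly in the paper *)
Definition grad (mu : R) (A : 'M[R]_(m, n)) (x : 'cV[R]_n) (i : 'I_n) : R :=
  1 - \sum_(j < m) A j i * expR ((1 - (A *m x) j 0) / mu).

Definition inDelta (A : 'M[R]_(m, n)) (x : 'cV[R]_n) : Prop :=
  forall i : 'I_n, 0 <= x i 0 <= 3 / colmax A i.
End Defs.

(* Main.v *)
Require Import Defs.
From mathcomp Require Import all_boot all_order all_algebra.
From mathcomp Require Import all_classical all_reals all_analysis.
From mathcomp Require Import ring lra.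
Import Order.TTheory GRing.Theory Num.Theory.
Local Open Scope ring_scope.
Lemma colmax_ge (R : realType) m n (A : 'M[R]_(m, n)) i j : A j i <= colmax A i.
Proof. rewrite /colmax. exact: (le_bigmax _ (fun j => A j i) j). Qed.

Lemma shiftE (R : realType) m n (A : 'M[R]_(m, n)) (x : 'cV[R]_n) g i j :
  (A *m (x + g *: delta_mx i 0)) j 0 = (A *m x) j 0 + g * A j i.
Proof.
rewrite mulmxDr -scalemxAr -colE !mxE mulrC. done.
Qed.

Lemma expbnd (R : realType) (t : R) : `|t| <= 1/2 -> `|expR t - 1| <= 2 * `|t|.
Proof.
move=> ht; have := expR_ge1Dx t; have := expR_ge1Dx (- t); rewrite expRN.
have := expR_gt0 t; set e := expR t => e0 h1 h2.
have h3 : e * (1 - t) <= 1.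
  have : e * (1 + - t) <= e * e^-1 by rewrite ler_pM2l.
  by rewrite mulfV ?gt_eqF.
case: (lerP 0 t) => t0.
  rewrite !ger0_norm ?subr_ge0; try lra.
  move: ht; rewrite ger0_norm // => ht. nra.
rewrite !ltr0_norm ?subr_lt0; try lra.
move: ht; rewrite ltr0_norm // => ht.
have : e < 1. by rewrite -expR0 ltr_expR.
lra.
Qed.
Theorem lemma5 (R : realType) (m n : nat) (A : 'M[R]_(m, n)) (mu : R) :
  (forall (j : 'I_m) (i : 'I_n), 0 <= A j i) ->
  (forall i : 'I_n, exists j : 'I_m, A j i != 0) ->
  0 < mu ->
  let L := 4 / mu in
  forall x : 'cV[R]_n, inDelta A x ->
  forall i : 'I_n,
    (-1 < grad mu A x i < 1 ->
      forall gamma : R, `|gamma| <= 1 / (L * colmax A i) ->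
        `|grad mu A x i - grad mu A (x + gamma *: delta_mx i 0) i|
          <= L * colmax A i * `|gamma|) /\
    (grad mu A x i <= -1 ->
      forall gamma : R, gamma <= 1 / (L * colmax A i) ->
        grad mu A (x + gamma *: delta_mx i 0) i
          <= (1 - L * colmax A i / 2 * `|gamma|) * grad mu A x i).
Proof.
move=> HA Hcol mu0 L x _ i.
set c := colmax A i.
have cpos : 0 < c.
  have [j hj] := Hcol i.
  have := @colmax_ge _ _ _ A i j; have := HA j i; rewrite -/c; move: hj.
  rewrite neq_lt => /orP[]; lra.
have Ac j : A j i <= c by exact: (@colmax_ge _ _ _ A i j).
set E := fun j => expR ((1 - (A *m x) j 0) / mu).
set S := \sum_(j < m) A j i * E j.
have gx : grad mu A x i = 1 - S by [].
have gx' g : grad mu A (x + g *: delta_mx i 0) i =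
    1 - \sum_(j < m) A j i * E j * expR (- (g * A j i) / mu).
  rewrite /grad; congr (_ - _); apply: eq_bigr => j _.
  rewrite shiftE -mulrA -expRD; congr (_ * expR _); rewrite /=; ring.
have S0 : 0 <= S by apply: sumr_ge0 => j _; apply: mulr_ge0 => //; exact: expR_ge0.
have Lc : 1 / (L * c) = mu / (4 * c).
  rewrite /L; field; apply/andP; split; apply/negP; lra.
rewrite Lc; split.
- move=> hg g hgam.
  rewrite gx gx'.
  set T := \sum_(j < m) _.
  have -> : 1 - S - (1 - T) = T - S by ring.
  rewrite /T /S -sumrB.
  have k0 : 0 <= `|g| * c / mu by rewrite divr_ge0 ?mulr_ge0 ?normr_ge0 ?ltW.
  have hk : `|g| * c / mu <= 1/4.
    rewrite ler_pdivrMr //.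
    move: hgam; rewrite ler_pdivlMr; last by rewrite mulr_gt0.
    lra.
  apply: (le_trans (ler_norm_sum _ _ _)).
  apply: (@le_trans _ _ (\sum_(j < m) A j i * E j * (2 * (`|g| * c / mu)))).
    apply: ler_sum => j _.
    set e := expR _.
    have -> : A j i * E j * e - A j i * E j = A j i * E j * (e - 1) by ring.
    rewrite normrM ger0_norm; last first.
      by apply: mulr_ge0 => //; exact: expR_ge0.
    apply: ler_wpM2l; first by apply: mulr_ge0 => //; exact: expR_ge0.
    have ht : `|- (g * A j i) / mu| <= `|g| * c / mu.
      rewrite normrM normrN normrM (ger0_norm (HA j i)) normfV (gtr0_norm mu0).
      apply: ler_wpM2r; first by rewrite invr_ge0 ltW.
      by apply: ler_wpM2l.
    have h12 : `|- (g * A j i) / mu| <= 1/2 by lra.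
    apply: (le_trans (@expbnd R _ h12)); lra.
  rewrite -mulr_suml -/S.
  move: hg; rewrite gx => hg.
  rewrite /L.
  have -> : 4 / mu * c * `|g| = 2 * (2 * (`|g| * c / mu)) by rewrite /=; ring.
  apply: ler_wpM2r; lra.
- move=> hg g hgam.
  rewrite gx gx'. rewrite gx in hg.
  case: (lerP 0 g) => g0.
    rewrite ger0_norm //.
    set k := g * c / mu.
    have k0 : 0 <= k by rewrite /k divr_ge0 ?mulr_ge0 // ltW.
    have hS : S * (1 - k) <= \sum_(j < m) A j i * E j * expR (- (g * A j i) / mu).
      rewrite /S mulr_suml; apply: ler_sum => j _.
      apply: ler_wpM2l; first by apply: mulr_ge0 => //; exact: expR_ge0.
      apply: le_trans (expR_ge1Dx _).
      have : g * A j i / mu <= k.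
        apply: ler_wpM2r; first by rewrite invr_ge0 ltW.
        by apply: ler_wpM2l.
      rewrite mulNr; lra.
    have -> : L * c / 2 * g = 2 * k by rewrite /k /L; field; lra.
    have : 0 <= k * (S - 2) by apply: mulr_ge0; lra.
    nra.
  rewrite ltr0_norm //.
  have hS : S <= \sum_(j < m) A j i * E j * expR (- (g * A j i) / mu).
    rewrite /S; apply: ler_sum => j _.
    rewrite -[X in X <= _]mulr1; apply: ler_wpM2l; first by apply: mulr_ge0 => //; exact: expR_ge0.
    rewrite -expR0 ler_expR; apply: mulr_ge0; last by rewrite invr_ge0 ltW.
    rewrite oppr_ge0; apply: mulr_le0_ge0; [lra | exact: HA].
  have K0 : 0 <= L * c / 2 * - g.
    apply: mulr_ge0; last lra.
    apply: mulr_ge0; last lra.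
    apply: mulr_ge0; last lra.
    apply: divr_ge0; lra.
  have : 0 <= L * c / 2 * - g * (S - 1) by apply: mulr_ge0; lra.
  lra.
Qed.
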